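(* The map $\mathsf{Inc}$ from trees to increasing trees is a section of the forgetful map $\mathsf{Fgt}$ (i.e. $\mathsf{Fgt}(\mathsf{Inc}(T))=T$ for every tree $T$), and its linear extension is an injective morphism of unital algebras $(\overline{\mathcal{T}}_\bullet,\overline{\ast})\to(\mathcal{T}_\bullet,\overline{\ast})$, where $\overline{\ast}$ denotes left grafting on $\overline{\mathcal{T}}_\bullet$ and the restricted product on $\mathcal{T}_\bullet$.
   Context: A (planar rooted) tree is a finite planar rooted tree in which each vertex has one outgoing edge and at least two incoming edges (ordered left to right), incoming edges being leaves or coming from other vertices; $\varepsilon$ is the trivial tree with no vertex. For $m\ge1$, $\bigvee(T_0,\ldots,T_m)$ joins the roots of $T_0,\ldots,T_m$ to a new vertex with a new root; every non-trivial tree is uniquely such a wedge. A vertex with $j+1$ incoming edges carries $j$ branchings (pairs of consecutive incoming edges); the number of branchings is the degree. A level function on $T$ is a surjection $\lambda$ from the vertices onto $[k]=\{1,\ldots,k\}$ strictly increasing along each leaf-to-root path; an increasing tree is a pair $(T,\lambda)$; $\mathsf{Fgt}(T,\lambda)=T$. $\overline{\mathcal{T}}_\bullet$ (resp. $\mathcal{T}_\bullet$) is the free $\mathbb{Z}$-module on trees (resp. increasing trees), graded by number of branchings. Left grafting: $T_1\,\overline{\ast}\,T_2$ is obtained by grafting the root of $T_1$ onto the leftmost leaf of $T_2$ ($\varepsilon$ is the unit). For increasing trees, $(T_1,\lambda_1)\,\overline{\ast}\,(T_2,\lambda_2)$ is the left grafting of the underlying trees, with level $\lambda_1(v)$ on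 vertices of $T_1$ and $k_1+\lambda_2(v)$ on vertices of $T_2$, $k_1$ being the number of levels of $\lambda_1$. $\mathsf{Inc}$ is defined recursively: $\mathsf{Inc}(\varepsilon)=\varepsilon$; if $T=\bigvee(T_0,\ldots,T_m)$ and $\mathsf{Inc}(T_i)=(T_i,\lambda_i)$ with $k_i$ levels, then $\mathsf{Inc}(T)=(T,\lambda)$ where $\lambda(v)=k_0+\cdots+k_{i-1}+\lambda_i(v)$ for vertices $v$ of $T_i$ and the root vertex gets level $k_0+\cdots+k_m+1$. *)

(* Defs.v *)
From HB Require Import structures.
From mathcomp Require Import all_boot all_order all_algebra.
From mathcomp Require Import freeg.
Set Implicit Arguments. Unset Strict Implicit. Unset Printing Implicit Defensive.
Import GRing.Theory.

(* PLeaf = the trivial tree epsilon (a single edge, no vertex);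
   PNode [:: T_0; ...; T_m] = \bigvee(T_0,...,T_m). *)
Inductive ptree := PLeaf | PNode of seq ptree.

Fixpoint ptree_enc (t : ptree) : GenTree.tree unit :=
  match t with
  | PLeaf => GenTree.Leaf tt
  | PNode s => GenTree.Node 0 (map ptree_enc s)
  end.
Fixpoint ptree_dec (t : GenTree.tree unit) : ptree :=
  match t with
  | GenTree.Leaf _ => PLeaf
  | GenTree.Node _ s => PNode (map ptree_dec s)
  end.
Fixpoint ptree_encK (t : ptree) : ptree_dec (ptree_enc t) = t :=
  match t return ptree_dec (ptree_enc t) = t with
  | PLeaf => erefl
  | PNode s => congr1 PNode
      ((fix loop (s : seq ptree) : map ptree_dec (map ptree_enc s) = s :=
          match s with
          | [::] => erefl
          | x :: s' => f_equal2 cons (ptree_encK x) (loop s')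
          end) s)
  end.
HB.instance Definition _ := Countable.copy ptree (can_type ptree_encK).

Inductive ltree := LLeaf | LNode of nat & seq ltree.

Fixpoint ltree_enc (t : ltree) : GenTree.tree unit :=
  match t with
  | LLeaf => GenTree.Leaf tt
  | LNode n s => GenTree.Node n (map ltree_enc s)
  end.
Fixpoint ltree_dec (t : GenTree.tree unit) : ltree :=
  match t with
  | GenTree.Leaf _ => LLeaf
  | GenTree.Node n s => LNode n (map ltree_dec s)
  end.
Fixpoint ltree_encK (t : ltree) : ltree_dec (ltree_enc t) = t :=
  match t return ltree_dec (ltree_enc t) = t with
  | LLeaf => erefl
  | LNode n s => congr1 (LNode n)
      ((fix loop (s : seq ltree) : map ltree_dec (map ltree_enc s) = s :=
          match s with
          | [::] => erefl
          | x :: s' => f_equal2 cons (ltree_encK x) (loop s')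
          end) s)
  end.
HB.instance Definition _ := Countable.copy ltree (can_type ltree_encK).

Fixpoint is_tree (t : ptree) : bool :=
  match t with
  | PLeaf => true
  | PNode s => (1 < size s) && all is_tree s
  end.

Definition tree := {t : ptree | is_tree t}.
Definition eps : tree := exist is_tree PLeaf erefl.

Fixpoint branchings (t : ptree) : nat :=
  match t with
  | PLeaf => 0
  | PNode s => (size s).-1 + sumn (map branchings s)
  end.

(* left grafting: root of t1 grafted onto the leftmost leaf of t2 *)
Fixpoint pgraft (t1 t2 : ptree) : ptree :=
  match t2 with
  | PLeaf => t1
  | PNode [::] => PNode [::]
  | PNode (c :: s) => PNode (pgraft t1 c :: s)
  end.

Fixpoint forget (t : ltree) : ptree :=
  match t with
  | LLeaf => PLeaf
  | LNode _ s => PNode (map forget s)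
  end.

Fixpoint labels (t : ltree) : seq nat :=
  match t with
  | LLeaf => [::]
  | LNode n s => n :: flatten (map labels s)
  end.

Definition nlev (t : ltree) : nat := foldr maxn 0 (labels t).

Fixpoint strictly_increasing (t : ltree) : bool :=
  match t with
  | LLeaf => true
  | LNode n s =>
      all (fun c => if c is LNode m _ then m < n else true) s
      && all strictly_increasing s
  end.

Definition level_surj (t : ltree) : bool :=
  all (fun i => i \in iota 1 (nlev t)) (labels t)
  && all (fun i => i \in labels t) (iota 1 (nlev t)).

Definition is_itree (t : ltree) : bool :=
  is_tree (forget t) && strictly_increasing t && level_surj t.

Definition itree := {t : ltree | is_itree t}.
Definition ieps : itree := exist is_itree LLeaf erefl.

Definition Fgt (t : itree) : tree :=
  exist is_tree (forget (val t))
    (proj1 (andb_prop _ _ (proj1 (andb_prop _ _ (valP t))))).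

Fixpoint lshift (k : nat) (t : ltree) : ltree :=
  match t with
  | LLeaf => LLeaf
  | LNode n s => LNode (k + n) (map (lshift k) s)
  end.

Fixpoint lgraft_raw (t1 t2 : ltree) : ltree :=
  match t2 with
  | LLeaf => t1
  | LNode n [::] => LNode n [::]
  | LNode n (c :: s) => LNode n (lgraft_raw t1 c :: s)
  end.

Definition lgraft (t1 t2 : ltree) : ltree := lgraft_raw t1 (lshift (nlev t1) t2).

Fixpoint shift_acc (acc : nat) (cs : seq ltree) : seq ltree :=
  match cs with
  | [::] => [::]
  | c :: cs' => lshift acc c :: shift_acc (acc + nlev c) cs'
  end.

Fixpoint pinc (t : ptree) : ltree :=
  match t with
  | PLeaf => LLeaf
  | PNode s =>
      let cs := map pinc s in
      LNode (sumn (map nlev cs)).+1 (shift_acc 0 cs)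
  end.

(* Operations on the subtypes.  The results are always valid (closure
   facts), [insubd] with a default is only used to avoid carrying the
   closure proofs inside the definitions. *)
Definition tgraft (t1 t2 : tree) : tree := insubd eps (pgraft (val t1) (val t2)).
Definition igraft (t1 t2 : itree) : itree := insubd ieps (lgraft (val t1) (val t2)).
Definition Inc (t : tree) : itree := insubd ieps (pinc (val t)).

Notation Tbar := {freeg tree / int}.
Notation Tinc := {freeg itree / int}.

Definition Tbar_mul (x y : Tbar) : Tbar :=
  fglift (fun t1 => fglift (fun t2 => << tgraft t1 t2 >> : Tbar) y) x.
Definition Tinc_mul (x y : Tinc) : Tinc :=
  fglift (fun t1 => fglift (fun t2 => << igraft t1 t2 >> : Tinc) y) x.

Definition Tbar_one : Tbar := << eps >>.
Definition Tinc_one : Tinc := << ieps >>.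

Definition IncL (x : Tbar) : Tinc := fglift (fun t => << Inc t >> : Tinc) x.

(* Main.v *)
Require Import Defs.
From HB Require Import structures.
From mathcomp Require Import all_boot all_order all_algebra.
From mathcomp Require Import freeg.
Import GRing.Theory.

Notation lsh := Defs.lshift.
Arguments nlev : simpl never.

Fixpoint lin {A : Type} (x : A) (s : seq A) : Prop :=
  if s is y :: s' then y = x \/ lin x s' else False.

Definition ptree_ind' (P : ptree -> Prop) (HL : P PLeaf)
  (HN : forall s, (forall t, lin t s -> P t) -> P (PNode s)) : forall t, P t :=
  fix F t := match t with
  | PLeaf => HL
  | PNode s => HN s ((fix G s := match s return forall t, lin t s -> P t with
       | [::] => fun t H => False_ind _ H
       | x :: s' => fun t H => match H with
           | or_introl e => eq_ind x P (F x) t e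
           | or_intror H' => G s' t H' end end) s) end.

Definition ltree_ind' (P : ltree -> Prop) (HL : P LLeaf)
  (HN : forall n s, (forall t, lin t s -> P t) -> P (LNode n s)) : forall t, P t :=
  fix F t := match t with
  | LLeaf => HL
  | LNode n s => HN n s ((fix G s := match s return forall t, lin t s -> P t with
       | [::] => fun t H => False_ind _ H
       | x :: s' => fun t H => match H with
           | or_introl e => eq_ind x P (F x) t e
           | or_intror H' => G s' t H' end end) s) end.

Fixpoint nv (t : ptree) : nat :=
  match t with PLeaf => 0 | PNode s => (sumn (map nv s)).+1 end.

Lemma map_In_ext (A B : Type) (f g : A -> B) (s : seq A) :
  (forall t, lin t s -> f t = g t) -> map f s = map g s.
Proof.
elim: s => //= x s IH H; rewrite H; last by left.
by rewrite IH // => t Ht; apply: H; right.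
Qed.

Lemma lshift0 t : lsh 0 t = t.
Proof.
elim/ltree_ind': t => //= n s IH; rewrite add0n; congr LNode.
by rewrite -[RHS]map_id; apply: map_In_ext.
Qed.

Lemma lshiftD a b t : lsh a (lsh b t) = lsh (a + b) t.
Proof.
elim/ltree_ind': t => //= n s IH; rewrite addnA; congr LNode.
by rewrite -map_comp; apply: map_In_ext.
Qed.

Lemma labels_lshift k t : labels (lsh k t) = map (addn k) (labels t).
Proof.
elim/ltree_ind': t => //= n s IH; congr cons.
rewrite map_flatten -!map_comp; congr flatten; apply: map_In_ext => t Ht /=.
exact: IH.
Qed.

Lemma forget_lshift k t : forget (lsh k t) = forget t.
Proof.
elim/ltree_ind': t => //= n s IH; congr PNode.
by rewrite -map_comp; apply: map_In_ext.
Qed.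

Lemma forget_shift_acc a cs : map forget (shift_acc a cs) = map forget cs.
Proof.
by elim: cs a => //= c cs IH a; rewrite forget_lshift IH.
Qed.

Lemma forget_pinc t : forget (pinc t) = t.
Proof.
elim/ptree_ind': t => //= s IH; congr PNode.
rewrite forget_shift_acc -map_comp -[RHS]map_id; apply: map_In_ext.
exact: IH.
Qed.

Lemma nlev_perm l n : perm_eq l (iota 1 n) -> foldr maxn 0 l = n.
Proof.
move=> H.
have -> : foldr maxn 0 l = \max_(i <- l) i by rewrite unlock /reducebig; elim: l {H} => //= x l ->.
rewrite (perm_big _ H) /=.
case: n {H} => [|n]; first by rewrite big_nil.
rewrite -[n.+1]addn1 iotaD big_cat big_seq1 add1n.
rewrite addn1; apply: (elimT maxn_idPr).
apply/bigmax_leqP_seq => i; rewrite mem_iota => /andP[_ Hi] _.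
by rewrite add1n in Hi; apply: ltnW.
Qed.

Definition goodl (c : ltree) := perm_eq (labels c) (iota 1 (nlev c)).

Lemma labels_shift_acc a cs : all goodl cs ->
  perm_eq (flatten (map labels (shift_acc a cs))) (iota a.+1 (sumn (map nlev cs))).
Proof.
elim: cs a => [|c cs IH] a //= /andP[Hc Hcs].
rewrite iotaD; apply: perm_cat.
  rewrite labels_lshift -[a.+1]addn1 iotaDl; exact: perm_map.
by rewrite addSn; apply: IH.
Qed.

Lemma pinc_good t : goodl (pinc t) /\ nlev (pinc t) = nv t.
Proof.
elim/ptree_ind': t => [|s IH]; first by split => //; rewrite /goodl /nlev.
have Hall : all goodl (map pinc s).
  elim: s IH => //= x s IHs IH; rewrite (proj1 (IH x (or_introl erefl))).
  by rewrite IHs // => t Ht; apply: IH; right.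
have Hs : sumn (map nlev (map pinc s)) = sumn (map nv s).
  by rewrite -map_comp; congr sumn; apply: map_In_ext => t Ht /=; case: (IH t Ht).
have Hp : perm_eq (labels (pinc (PNode s))) (iota 1 (nv (PNode s))).
  rewrite [labels _]/= [nv _]/= Hs; set N := sumn _.
  have -> : iota 1 N.+1 = iota 1 N ++ [:: N.+1].
    by rewrite -[N.+1]addn1 iotaD /= add1n addn1.
  rewrite -cat1s perm_catC; apply: perm_cat => //.
  by have := labels_shift_acc 0 _ Hall; rewrite Hs.
have Hn : nlev (pinc (PNode s)) = nv (PNode s) by rewrite /nlev (nlev_perm _ _ Hp).
by split => //; rewrite /goodl Hn.
Qed.

Lemma nlev_pinc t : nlev (pinc t) = nv t.
Proof. by case: (pinc_good t). Qed.

Lemma root_le_nlev m l : m <= nlev (LNode m l).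
Proof. by rewrite /nlev /= leq_maxl. Qed.

Lemma si_lshift k t : strictly_increasing (lsh k t) = strictly_increasing t.
Proof.
elim/ltree_ind': t => //= n s IH; congr andb.
  rewrite all_map; apply: eq_all => c /=; case: c => //= m _; by rewrite ltn_add2l.
rewrite all_map; elim: s IH => //= x s IHs IH; rewrite IH; last by left.
by rewrite IHs // => t Ht; apply: IH; right.
Qed.

Lemma shift_acc_roots a cs :
  all (fun c => if c is LNode m _ then m < (a + sumn (map nlev cs)).+1 else true) (shift_acc a cs).
Proof.
elim: cs a => //= c cs IH a; apply/andP; split.
  case: c => //= m l; rewrite ltnS leq_add2l; apply: leq_trans (root_le_nlev m l) _.
  exact: leq_addr.
by have := IH (a + nlev c); rewrite addnA.
Qed.

Lemma shift_acc_si a cs : all strictly_increasing cs -> all strictly_increasing (shift_acc a cs).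
Proof. by elim: cs a => //= c cs IH a /andP[H1 H2]; rewrite si_lshift H1 IH. Qed.

Lemma pinc_si t : strictly_increasing (pinc t).
Proof.
elim/ptree_ind': t => //= s IH; apply/andP; split.
  by have := shift_acc_roots 0 (map pinc s).
apply: shift_acc_si; elim: s IH => //= x s IHs IH; rewrite IH; last by left.
by rewrite IHs // => t Ht; apply: IH; right.
Qed.

Lemma pinc_surj t : level_surj (pinc t).
Proof.
have [Hp Hn] := pinc_good t; rewrite /goodl in Hp.
rewrite /level_surj; apply/andP; split; apply/allP => i.
  by rewrite (perm_mem Hp).
by rewrite (perm_mem Hp).
Qed.

Lemma is_itree_pinc t : is_itree (pinc t) = is_tree t.
Proof. by rewrite /is_itree forget_pinc pinc_si pinc_surj !andbT. Qed.

Lemma Inc_val T : val (Inc T) = pinc (val T).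
Proof. have H : is_itree (pinc (val T)) by rewrite is_itree_pinc; case: T. by rewrite /Inc insubdK. Qed.

Lemma Fgt_Inc T : Fgt (Inc T) = T.
Proof. by apply: val_inj; rewrite /= Inc_val forget_pinc. Qed.

Lemma is_tree_pgraft t1 t2 : is_tree t1 -> is_tree t2 -> is_tree (pgraft t1 t2).
Proof.
move=> H1; elim/ptree_ind': t2 => //= [[|c s]] // IH /andP[Hs /andP[Hc Hr]].
apply/andP; split => //; apply/andP; split => //; exact: IH (or_introl erefl) Hc.
Qed.

Lemma nv_pgraft t1 t2 : is_tree t2 -> nv (pgraft t1 t2) = nv t1 + nv t2.
Proof.
elim/ptree_ind': t2 => //= [|[|c s]] //; first by rewrite addn0.
move=> IH /andP[Hs /andP[Hc Hr]] /=.
by rewrite IH //; [rewrite -!addnA addnS|left].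
Qed.

Lemma map_lshift_shift_acc k a cs : map (lsh k) (shift_acc a cs) = shift_acc (k + a) cs.
Proof. by elim: cs a => //= c cs IH a; rewrite lshiftD IH addnA. Qed.

Lemma sumn_pinc s : sumn (map nlev (map pinc s)) = sumn (map nv s).
Proof. by rewrite -map_comp; congr sumn; apply: eq_map => x /=; rewrite nlev_pinc. Qed.

Lemma pinc_pgraft t1 t2 : is_tree t2 -> pinc (pgraft t1 t2) = lgraft (pinc t1) (pinc t2).
Proof.
elim/ptree_ind': t2 => [|[|c s]]; [by rewrite /lgraft /= | by [] | ].
move=> IH /andP[Hs /andP[Hc Hr]].
rewrite /lgraft /= !lshift0 !add0n !nlev_pinc !sumn_pinc (nv_pgraft _ _ Hc).
rewrite (IH c (or_introl erefl) Hc) /lgraft map_lshift_shift_acc nlev_pinc.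
by rewrite addnS addnA.
Qed.

Section FgliftAdd.
Context (R : nzRingType) (K : choiceType) (M : lmodType R) (f : K -> M).
HB.instance Definition _ :=
  GRing.isZmodMorphism.Build {freeg K / R} M (fglift f) (lift_is_additive f).
End FgliftAdd.

Local Open Scope ring_scope.

Lemma scalez (V : lmodType int) (a : int) (v : V) : a *: v = v *~ a.
Proof. by rewrite -scaler_int intz. Qed.

Lemma fglift_sumE (R : nzRingType) (K : choiceType) (M : lmodType R) (f : K -> M) (x : {freeg K / R}) :
  fglift f x = \sum_(z <- dom x) coeff z x *: f z.
Proof.
rewrite -{1}[x]freeg_sumE.
rewrite raddf_sum /=.
apply: eq_bigr => z _; exact: liftU.
Qed.

Lemma eq_fglift (R : nzRingType) (K : choiceType) (M : lmodType R) (f g : K -> M) (x : {freeg K / R}) :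
  f =1 g -> fglift f x = fglift g x.
Proof. by move=> H; rewrite !fglift_sumE; apply: eq_bigr => z _; rewrite H. Qed.

Lemma fglift_comp (R : nzRingType) (K : choiceType) (M N : lmodType R) (g : K -> M) (phi : M -> N) :
  phi 0 = 0 -> {morph phi : u v / u + v} -> (forall c v, phi (c *: v) = c *: phi v) ->
  forall x, phi (fglift g x) = fglift (fun t => phi (g t)) x.
Proof.
move=> H0 HD HZ x; rewrite !fglift_sumE (big_morph phi HD H0).
by apply: eq_bigr => z _; rewrite HZ.
Qed.

Lemma fglift_U (K L : choiceType) (M : lmodType int) (H : L -> M) (k : K -> L) x :
  fglift H (fglift (fun t => << k t >> : {freeg L / int}) x) = fglift (fun t => H (k t)) x.
Proof.
rewrite (@fglift_comp _ _ _ _ _ (fglift H)) ?raddf0 //; last first.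
  by move=> c v; rewrite !scalez raddfMz.
  exact: raddfD.
by apply: eq_fglift => t; rewrite liftU scale1r.
Qed.

Lemma Inc_tgraft t1 t2 : Inc (tgraft t1 t2) = igraft (Inc t1) (Inc t2).
Proof.
apply: val_inj.
have Ht : is_tree (pgraft (val t1) (val t2)) by apply: is_tree_pgraft; [case: t1|case: t2].
have Hv : val (tgraft t1 t2) = pgraft (val t1) (val t2) by rewrite /tgraft insubdK.
have Hi : is_itree (pinc (pgraft (val t1) (val t2))) by rewrite is_itree_pinc.
rewrite Inc_val Hv /igraft !Inc_val -pinc_pgraft; last exact: (valP t2).
by rewrite insubdK.
Qed.

Lemma coeff_inj (K L : choiceType) (k : K -> L) : injective k ->
  forall (x : {freeg K / int}) t,
  coeff (k t) (fglift (fun s => << k s >> : {freeg L / int}) x) = coeff t x.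
Proof.
move=> kI x t; rewrite fglift_sumE -[in RHS](freeg_sumE x) !raddf_sum.
apply: eq_bigr => z _ /=; by rewrite coeffZ !coeffU mul1r (inj_eq kI).
Qed.

Theorem lemma4p5 :
  (forall T : tree, Fgt (Inc T) = T) /\
  (forall (a : int) (x y : Tbar), IncL (a *: x + y) = a *: IncL x + IncL y) /\
  IncL Tbar_one = Tinc_one /\
  (forall x y : Tbar, IncL (Tbar_mul x y) = Tinc_mul (IncL x) (IncL y)) /\
  injective IncL.
Proof.
split; first exact: Fgt_Inc.
split.
  by move=> a x y; rewrite /IncL raddfD !scalez raddfMz.
split.
  rewrite /IncL /Tbar_one liftU scale1r; congr << _ >>.
  by apply: val_inj; rewrite Inc_val.
split.
  move=> x y; rewrite /IncL /Tbar_mul /Tinc_mul fglift_U.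
  rewrite (@fglift_comp _ _ _ _ _ (fglift (fun t => << Inc t >> : Tinc))) ?raddf0 //;
    last (by move=> c v; rewrite !scalez raddfMz); last exact: raddfD.
  apply: eq_fglift => t1 /=; rewrite !fglift_U.
  by apply: eq_fglift => t2 /=; rewrite Inc_tgraft.
move=> x y H; apply/eqP/freeg_eqP => t.
have E : forall z : Tbar, coeff (Inc t) (IncL z) = coeff t z.
  move=> z; rewrite /IncL coeff_inj //; exact: (can_inj Fgt_Inc).
by rewrite -!E H.
Qed.
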